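(* Let $\mathcal{X}=\{x_1,\dots,x_n\}$ and $\mathcal{Y}=\{y_1,\dots,y_m\}$ be the entity sets of a source KG and a target KG, with triplet sets $\mathcal{T}^{\mathcal{X}}$ and $\mathcal{T}^{\mathcal{Y}}$ respectively (each already augmented with reverse triplets as described in the context). Let $\mathbf{x}_1,\dots,\mathbf{x}_n,\mathbf{y}_1,\dots,\mathbf{y}_m\in\mathbb{R}^d$ be entity embeddings and suppose that, in each KG separately, every entity $e$ with $\mathcal{T}_e\neq\emptyset$ satisfies the TransE stationarity relation $$\mathbf{e}=\frac{1}{|\mathcal{T}_e|}\sum_{(e,r,o)\in\mathcal{T}_e}\Big(\mathbf{o}-\frac{1}{|\mathcal{T}_r|}\sum_{(s',r,o')\in\mathcal{T}_r}(\mathbf{o}'-\mathbf{s}')\Big),$$ where the triplet sets are taken within that KG. Define $\Lambda=(\lambda_{i,j})\in\mathbb{R}^{n\times n}$ by $$\lambda_{i,j}=\frac{1}{|\mathcal{T}_{x_i}|}\Big(|R(x_i,x_j)|+\sum_{r\in R}\frac{|\mathcal{T}_{x_i,r}|}{|\mathcal{T}_r|}\big(|\mathcal{T}_{x_j,r}|-|\mathcal{T}_{x_j,r^{-1}}|\big)\Big)$$ (computed in the source KG), and $\Lambda'=(\lambda'_{i,j})\in\mathbb{R}^{m\times m}$ analogously in the target KG. Then $\mathbf{x}_i=\sum_{k=1}^n\lambda_{i,k}\mathbf{x}_k$ for all $i$, $\mathbf{y}_j=\sum_{l=1}^m\lambda'_{j,l}\mathbf{y}_l$ for all $j$, and the pairwise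 similarity matrix $\Omega=(\omega_{i,j})\in\mathbb{R}^{n\times m}$, $\omega_{i,j}=\mathbf{x}_i\cdot\mathbf{y}_j$, is a fixpoint of the map $\Omega\mapsto\Lambda\Omega(\Lambda')^\top$, i.e. $\Lambda\Omega(\Lambda')^\top=\Omega$.
   Context: A knowledge graph (KG) is a set of triplets $(s,r,o)$ (subject entity, relation, object entity). For each triplet $(s,r,o)$ a reverse triplet $(o,r^{-1},s)$ is added, with $r^{-1}$ a new relation symbol; $R$ denotes the set of all relations (including reverse ones). Notation: $\mathcal{T}_e$ is the set of triplets with $e$ as subject; $\mathcal{T}_r$ the set of triplets with relation $r$; $\mathcal{T}_{e,r}$ the set of triplets with subject $e$ and relation $r$; $R(x_i,x_j)$ the set of relations $r$ with $(x_i,r,x_j)$ a triplet. All sets of triplets involved are assumed nonempty where they appear in a denominator. The stationarity relation above is the form the entity embeddings take at a stationary point of the TransE-based entity alignment loss (translational loss $\sum\|\mathbf{s}+\mathbf{r}-\mathbf{o}\|_2^2$ plus alignment loss plus unit-norm constraints), after eliminating relation embeddings. *)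

(* Defs.v *)
From HB Require Import structures.
From mathcomp Require Import all_boot all_order all_algebra.
Set Implicit Arguments. Unset Strict Implicit. Unset Printing Implicit Defensive.
Import Order.TTheory GRing.Theory Num.Theory.
Local Open Scope ring_scope.

(* A knowledge graph over entities E with base relations B.
   The full relation set is  rel B := B * bool, where (r, false) is the
   original relation r and (r, true) is its reverse r^{-1}. *)
Definition rel (B : finType) := (B * bool)%type.
Definition inv {B : finType} (r : rel B) : rel B := (r.1, ~~ r.2).

Definition augment {E B : finType} (T0 : {set E * B * E}) : {set E * rel B * E} :=
  [set t : E * rel B * E |
     let: (s, (r, b), o) := t in
     if b then (o, r, s) \in T0 else (s, r, o) \in T0].

Section KG.
Variables (E B : finType) (T : {set E * rel B * E}).

Definition T_e (e : E) := [set t in T | t.1.1 == e].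
Definition T_r (r : rel B) := [set t in T | t.1.2 == r].
Definition T_er (e : E) (r : rel B) := [set t in T | (t.1.1 == e) && (t.1.2 == r)].
Definition Rset (ei ej : E) := [set r : rel B | (ei, r, ej) \in T].
End KG.

Definition lambda_mx (R : realFieldType) (n : nat) (B : finType)
    (T : {set 'I_n * rel B * 'I_n}) : 'M[R]_n :=
  \matrix_(i < n, j < n)
    ((#|T_e T i|%:R)^-1 *
      (#|Rset T i j|%:R +
       \sum_(r : rel B) (#|T_er T i r|%:R / #|T_r T r|%:R) *
                        (#|T_er T j r|%:R - #|T_er T j (inv r)|%:R))).

(* TransE stationarity: row e of X is the embedding of entity e. *)
Definition stationary (R : realFieldType) (n d : nat) (B : finType)
    (T : {set 'I_n * rel B * 'I_n}) (X : 'M[R]_(n, d)) : Prop :=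
  forall e : 'I_n, T_e T e != set0 ->
    row e X =
      (#|T_e T e|%:R)^-1 *:
        \sum_(t in T_e T e)
          (row t.2 X -
           (#|T_r T t.1.2|%:R)^-1 *:
             \sum_(t' in T_r T t.1.2) (row t'.2 X - row t'.1.1 X)).

Definition sim_mx (R : realFieldType) (n m d : nat)
    (X : 'M[R]_(n, d)) (Y : 'M[R]_(m, d)) : 'M[R]_(n, m) :=
  \matrix_(i < n, j < m) \sum_(k < d) X i k * Y j k.

(* Main.v *)
Require Import Defs.
From HB Require Import structures.
From mathcomp Require Import all_boot all_order all_algebra.
From mathcomp Require Import ring.
Import Order.TTheory GRing.Theory Num.Theory.
Local Open Scope ring_scope.
Notation inv := Defs.inv.

Lemma part (R : realFieldType) (V : lmodType R) (U J : finType) (A : {set U})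
  (g : U -> J) (F : J -> V) :
  \sum_(t in A) F (g t) = \sum_(j : J) #|[set t in A | g t == j]|%:R *: F j.
Proof.
rewrite (partition_big g predT) //=. apply: eq_bigr => k _.
rewrite (eq_bigr (fun _ => F k)); last by move=> t /andP[_ /eqP->].
rewrite (eq_bigl (fun t => t \in [set t in A | g t == k])); last by move=> t; rewrite inE.
by rewrite sumr_const scaler_nat.
Qed.

Lemma aug_sym (E B : finType) (T0 : {set E * B * E}) a r b :
  ((a, r, b) \in augment T0) = ((b, inv r, a) \in augment T0).
Proof. by case: r => r0 [] ; rewrite !inE. Qed.

Lemma card1 (E B : finType) (T : {set E * Defs.rel B * E}) i k :
  #|[set t in T_e T i | t.2 == k]| = #|Rset T i k|.
Proof.
rewrite -[RHS](card_imset _ (f := fun r => (i, r, k))); last by move=> r1 r2 [].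
apply: eq_card => t; apply/idP/idP.
- rewrite !inE => /andP[/andP[tT /eqP ti] /eqP tk].
  apply/imsetP; exists t.1.2; last by case: t tT ti tk => [[s r] o] /= ? -> ->.
  by rewrite inE; case: t tT ti tk => [[s r] o] /= H <- <-.
- by case/imsetP => r; rewrite !inE => rT ->; rewrite rT !eqxx.
Qed.

Lemma card2 (E B : finType) (T : {set E * Defs.rel B * E}) i r :
  #|[set t in T_e T i | t.1.2 == r]| = #|T_er T i r|.
Proof. by apply: eq_card => t; rewrite !inE andbA. Qed.

Lemma card3 (E B : finType) (T : {set E * Defs.rel B * E}) r k :
  #|[set t in T_r T r | t.1.1 == k]| = #|T_er T k r|.
Proof. by apply: eq_card => t; rewrite !inE -andbA [(_ == r) && _]andbC. Qed.

Lemma card4 (E B : finType) (T0 : {set E * B * E}) r k :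
  #|[set t in T_r (augment T0) r | t.2 == k]| = #|T_er (augment T0) k (inv r)|.
Proof.
set f := fun t : E * Defs.rel B * E => (t.2, inv t.1.2, t.1.1).
have finv : forall t, f (f t) = t.
  by case=> [[s [r0 b]] o]; rewrite /f /Defs.inv /= negbK.
rewrite -[RHS](card_imset _ (can_inj finv)).
apply: eq_card => t; apply/idP/idP.
- move=> tB; apply/imsetP; exists (f t); last by rewrite finv.
  move: tB; case: t => [[s r'] o]; rewrite !inE /f /= => /andP[/andP[tT /eqP Er] /eqP Eo].
  subst; case: r tT => r0 [] /= tT; by rewrite tT !eqxx.
- case/imsetP => u; case: u => [[s r'] o]; rewrite !inE /f /= => /andP[tT /andP[/eqP Es /eqP Er]] ->.
  subst; case: r tT => r0 [] /= tT; by rewrite tT !eqxx.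
Qed.

Lemma row_fix (R : realFieldType) n d (B : finType) (T0 : {set 'I_n * B * 'I_n})
  (X : 'M[R]_(n, d)) :
  (forall i, T_e (augment T0) i != set0) -> stationary (augment T0) X ->
  forall i, row i X = \sum_(k < n) lambda_mx R (augment T0) i k *: row k X.
Proof.
move=> ne st i. rewrite {1}(st i (ne i)).
under [RHS]eq_bigr do rewrite mxE -scalerA.
rewrite -scaler_sumr; congr (_ *: _).
rewrite sumrB.
under [RHS]eq_bigr do rewrite scalerDl.
rewrite big_split /=; congr (_ + _).
  rewrite (@part _ _ _ _ _ (fun t => t.2) (fun k => row k X)).
  by apply: eq_bigr => k _; rewrite card1.
rewrite (@part _ _ _ _ _ (fun t => t.1.2) (fun r => (#|T_r (augment T0) r|%:R)^-1 *:
   \sum_(t' in T_r (augment T0) r) (row t'.2 X - row t'.1.1 X))).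
rewrite -sumrN.
under [RHS]eq_bigr do rewrite scaler_suml.
rewrite exchange_big /=; apply: eq_bigr => r _.
rewrite card2 sumrB (@part _ _ _ _ _ (fun t => t.2) (fun k => row k X))
  (@part _ _ _ _ _ (fun t => t.1.1) (fun k => row k X)) -sumrB.
rewrite scaler_sumr scaler_sumr -sumrN; apply: eq_bigr => k _.
rewrite card4 card3 -scalerBl !scalerA -scaleNr; congr (_ *: _).
ring.
Qed.

Theorem theorem1 (R : realFieldType) (n m d : nat) (Bx By : finType)
    (T0x : {set 'I_n * Bx * 'I_n}) (T0y : {set 'I_m * By * 'I_m})
    (X : 'M[R]_(n, d)) (Y : 'M[R]_(m, d)) :
  (forall i : 'I_n, T_e (augment T0x) i != set0) ->
  (forall j : 'I_m, T_e (augment T0y) j != set0) ->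
  stationary (augment T0x) X ->
  stationary (augment T0y) Y ->
  let L : 'M[R]_n := lambda_mx R (augment T0x) in
  let L' : 'M[R]_m := lambda_mx R (augment T0y) in
  let Om := sim_mx X Y in
  [/\ (forall i : 'I_n, row i X = \sum_(k < n) L i k *: row k X),
      (forall j : 'I_m, row j Y = \sum_(l < m) L' j l *: row l Y) &
      L *m Om *m L'^T = Om].
Proof.
move=> nx ny sx sy L L' Om.
have hx := @row_fix R _ _ _ _ X nx sx; have hy := @row_fix R _ _ _ _ Y ny sy.
have hfix : forall p (B : finType) (T0 : {set 'I_p * Defs.rel B * 'I_p}) (Z : 'M[R]_(p, d)),
  (forall i, row i Z = \sum_(k < p) lambda_mx R T0 i k *: row k Z) ->
  lambda_mx R T0 *m Z = Z.
  move=> p B T0 Z h; apply/row_matrixP => i.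
  rewrite row_mul mulmx_sum_row h; apply: eq_bigr => k _; by rewrite mxE.
split => //.
have -> : Om = X *m Y^T.
  by apply/matrixP => i j; rewrite !mxE; apply: eq_bigr => k _; rewrite mxE.
by rewrite mulmxA (hfix _ _ _ _ hx) -mulmxA -trmx_mul (hfix _ _ _ _ hy).
Qed.
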